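(* For every $n\ge1$ and every $\ell>0$, the maps $(\phi,\gamma)\mapsto\gamma\circ\phi$ give homeomorphisms \[ \mathcal G(\ell,n)\times N_n\cong\mathbb P^\ell_{0_n,1_n}\mathbb M^{\mathcal G}(|\square[n]|^t_{reg}),\qquad \mathcal G(\ell,n)\times\partial N_n\cong\mathbb P^\ell_{0_n,1_n}\mathbb M^{\mathcal G}(|\partial\square[n]|^t_{reg}). \] In particular, for $\ell=1$, $\mathcal G(1,n)\times N_n\cong\mathbb P^{top}_{0_n,1_n}|\square[n]|^t_{reg}$ and $\mathcal G(1,n)\times\partial N_n\cong\mathbb P^{top}_{0_n,1_n}|\partial\square[n]|^t_{reg}$ (for $n=1$ both sides of the boundary statement are empty).
   Context: $\mathbf{Top}$: $\Delta$-generated spaces; mapping spaces carry the $\Delta$-kelleyfication of the compact-open topology, subspaces the $\Delta$-kelleyfication of the relative topology. Precubical sets are presheaves on the box category $\square$; $\square[n]$ is representable, $\partial\square[n]$ its sub-presheaf of cubes of dimension $\le n-1$; $|K|_{geom}=\mathrm{colim}_{\square[n]\to K}[0,1]^n$, so $|\partial\square[n]|_{geom}$ is the boundary of $[0,1]^n$. $0_n=(0,\dots,0)$, $1_n=(1,\dots,1)$. A $d$-path of $[0,1]^n$ is a continuous map $[0,\ell]\to[0,1]^n$ nondecreasing in each coordinate; a $d$-path of $K$ is a Moore composition of images of $d$-paths of cubes under the maps $|c|_{geom}$, tame if the pieces can be chosen with endpoints at vertices. Regular: constant on no nondegenerate interval. $L_1$-arc length: $\sum_i|\gamma_i(t')-\gamma_i(t)|$,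 additive. A $d$-path of length $n$ is natural if the $L_1$-arc length of $\gamma|_{[0,t]}$ equals $t$. $N_n$ (resp. $\partial N_n$) is the space of tame natural $d$-paths $[0,n]\to[0,1]^n$ (resp. with image in $|\partial\square[n]|_{geom}$) from $0_n$ to $1_n$. $\mathcal G(\ell,n)$: nondecreasing homeomorphisms $[0,\ell]\to[0,n]$. Multipointed $d$-spaces $(|X|,X^0,\mathbb P^{top}X)$; $|K|^t_{reg}$ has underlying space $|K|_{geom}$, states $K_0$, execution paths the nonconstant tame regular $d$-paths $[0,1]\to|K|_{geom}$ between vertices. $\mathbb M^{\mathcal G}(X)$ is the Moore flow with $\mathbb P^\ell_{\alpha,\beta}\mathbb M^{\mathcal G}(X)=\{\gamma(t/\ell)\mid\gamma\in\mathbb P^{top}_{\alpha,\beta}X\}\subset\mathbf{TOP}([0,\ell],|X|)$. *)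

(* Defs.v *)
From HB Require Import structures.
From mathcomp Require Import all_boot all_order all_algebra.
From mathcomp Require Import all_classical all_reals all_analysis.
Unset Printing Implicit Defensive.
Import Order.TTheory GRing.Theory Num.Theory.
Import numFieldNormedType.Exports.
Local Open Scope classical_set_scope.
Local Open Scope ring_scope.

(* Spaces are given as a carrier subset of an ambient type together   *)
(* with an explicit topology (a family of open subsets of the carrier)*)
Definition space (X : Type) := (set X * set (set X))%type.

Definition homeo {X Y : Type} (SA : space X) (SB : space Y) (f : X -> Y) :=
  [/\ (forall x, SA.1 x -> SB.1 (f x)),
      (forall x y, SA.1 x -> SA.1 y -> f x = f y -> x = y),
      (forall y, SB.1 y -> exists2 x, SA.1 x & f x = y) &
      (forall U, U `<=` SA.1 -> (SA.2 U <-> SB.2 (f @` U)))].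

Definition gen_top {T : Type} (B : set (set T)) : set (set T) :=
  [set U | forall x, U x -> exists (k : nat) (V : 'I_k -> set T),
      [/\ (forall i, B (V i)), (forall i, V i x) &
          (forall y, (forall i, V i y) -> U y)]].

Definition subspace {X : Type} (S : set X) (t : set (set X)) : set (set X) :=
  [set U | exists V, t V /\ U = S `&` V].

Definition prod_top {X Y : Type} (S1 : space X) (S2 : space Y)
  : set (set (X * Y)) :=
  [set W | W `<=` S1.1 `*` S2.1 /\ forall p, W p -> exists U V,
     [/\ S1.2 U, S2.2 V, U p.1, V p.2 &
         forall q, U q.1 -> V q.2 -> W q]].

Definition simplex (R : realType) (m : nat) : set 'rV[R]_m.+1 :=
  [set x | (forall i, 0 <= x ord0 i) /\ \sum_i x ord0 i = 1].

Definition open_in {T : topologicalType} (D U : set T) :=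
  exists O, open O /\ D `&` U = D `&` O.

(* Delta-kelleyfication of a topology t on S (opens of t are subsets  *)
(* of S): final topology w.r.t. all continuous maps Delta^m -> S.      *)
Definition kelley (R : realType) {X : Type} (S : set X) (t : set (set X))
  : set (set X) :=
  [set U | U `<=` S /\ forall (m : nat) (s : 'rV[R]_m.+1 -> X),
     (forall x, @simplex R m x -> S (s x)) ->
     (forall V, t V -> open_in (@simplex R m) (s @^-1` V)) ->
     open_in (@simplex R m) (s @^-1` U)].

Definition subsp (R : realType) {X : Type} (P : set X) (S : space X) : space X :=
  (P, kelley R P (subspace P S.2)).

Definition prodsp (R : realType) {X Y : Type} (S1 : space X) (S2 : space Y)
  : space (X * Y) :=
  (S1.1 `*` S2.1, kelley R (S1.1 `*` S2.1) (prod_top S1 S2)).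

Definition Ival {R : realType} (l : R) := {t : R | (0 <= t <= l)}.

Definition Itop {R : realType} (l : R) : set (set (Ival l)) :=
  [set U | exists O : set R, open O /\ U = [set t | O (sval t)]].

Definition Icompact {R : realType} (l : R) : set (set (Ival l)) :=
  [set C | compact [set sval t | t in C]].

Definition cont {A B : Type} (tA : set (set A)) (tB : set (set B)) (f : A -> B) :=
  forall U, tB U -> tA (f @^-1` U).

Definition compact_open {A Y : Type} (KA : set (set A)) (tY : set (set Y))
  : set (set (A -> Y)) :=
  gen_top [set W | exists C U, [/\ KA C, tY U &
             W = [set f | forall a, C a -> U (f a)]]].

Definition Cmap {R : realType} (L : R) {Y : Type} (tY : set (set Y)) (B : set Y)
  : set (Ival L -> Y) :=
  [set f | (forall t, B (f t)) /\ cont (@Itop R L) tY f].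

Definition TOPsp {R : realType} (L : R) {Y : Type} (tY : set (set Y)) (B : set Y)
  : space (Ival L -> Y) :=
  (Cmap L tY B,
   kelley R (Cmap L tY B)
     (subspace (Cmap L tY B) (compact_open (@Icompact R L) tY))).

(* A cube of square[n] = a face of [0,1]^n: None = free coordinate,   *)
(* Some b = coordinate fixed to b.                                     *)
Definition face (n : nat) := 'I_n -> option bool.

Definition in_face {R : realType} {n : nat} (c : face n) (x : 'rV[R]_n) :=
  forall i, match c i with
            | None => 0 <= x ord0 i <= 1
            | Some b => x ord0 i = (if b then 1 else 0)
            end.

Definition cubeF (n : nat) : set (face n) := setT.
Definition bdryF (n : nat) : set (face n) := [set c | exists i, c i <> None].

Definition realiz (R : realType) {n : nat} (F : set (face n)) : set 'rV[R]_n :=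
  [set x | exists2 c, F c & in_face c x].

Definition vertex {R : realType} {n : nat} (x : 'rV[R]_n) :=
  forall i, x ord0 i = 0 \/ x ord0 i = 1.

Definition zero_n (R : realType) (n : nat) : 'rV[R]_n := const_mx 0.
Definition one_n (R : realType) (n : nat) : 'rV[R]_n := const_mx 1.

(* tame d-path of the sub-complex F, of length L: a continuous map    *)
(* [0,L] -> |F| which is a Moore composition of d-paths of cubes of F *)
(* (i.e. pieces lying in a cube c of F, nondecreasing in each         *)
(* coordinate), the subdivision points being mapped to vertices.       *)
Definition tame_dpath {R : realType} {n : nat} (F : set (face n)) {L : R}
  (g : Ival L -> 'rV[R]_n) :=
  cont (@Itop R L) open g /\
  exists (k : nat) (tt : nat -> R),
    [/\ tt 0%N = 0, tt k = L,
        (forall i, (i < k)%N -> tt i <= tt i.+1),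
        (forall i, (i < k)%N -> exists2 c, F c &
            (forall s, tt i <= sval s <= tt i.+1 -> in_face c (g s)) /\
            (forall s u : Ival L, tt i <= sval s -> sval s <= sval u -> sval u <= tt i.+1 ->
               forall j, g s ord0 j <= g u ord0 j)) &
        (forall i, (i <= k)%N -> forall s, sval s = tt i -> vertex (g s))].

Definition from_to {R : realType} {n : nat} {L : R} (g : Ival L -> 'rV[R]_n)
  (a b : 'rV[R]_n) :=
  (forall s, sval s = 0 -> g s = a) /\ (forall s, sval s = L -> g s = b).

(* natural: the L1-arc length of g restricted to [0,t] equals t *)
Definition natural {R : realType} {n : nat} {L : R} (g : Ival L -> 'rV[R]_n) :=
  forall s t : Ival L, sval s = 0 -> \sum_i `|g t ord0 i - g s ord0 i| = sval t.

Definition regular {R : realType} {n : nat} {L : R} (g : Ival L -> 'rV[R]_n) :=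
  forall s t : Ival L, sval s < sval t -> exists u : Ival L, sval s <= sval u <= sval t /\ g u <> g s.

Definition Nset (R : realType) {n : nat} (F : set (face n))
  : set (Ival (n%:R : R) -> 'rV[R]_n) :=
  [set g | [/\ tame_dpath F g, natural g & from_to g (zero_n R n) (one_n R n)]].

Definition Nsp (R : realType) {n : nat} (F : set (face n)) :=
  subsp R (Nset R F) (TOPsp (n%:R : R) open (realiz R F)).

Definition Gset {R : realType} (l : R) (n : nat) : set (Ival l -> Ival (n%:R : R)) :=
  [set phi | (forall s t : Ival l, sval s <= sval t -> sval (phi s) <= sval (phi t)) /\
     exists psi : Ival (n%:R : R) -> Ival l,
       [/\ cancel phi psi, cancel psi phi,
           cont (@Itop R l) (@Itop R n%:R) phi & cont (@Itop R n%:R) (@Itop R l) psi]].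

Definition Gsp {R : realType} (l : R) (n : nat) :=
  subsp R (Gset l n) (TOPsp l (@Itop R n%:R) setT).

Definition Ptop (R : realType) {n : nat} (F : set (face n))
  : set (Ival (1 : R) -> 'rV[R]_n) :=
  [set g | [/\ tame_dpath F g, regular g, (exists s t, g s <> g t) &
               from_to g (zero_n R n) (one_n R n)]].

Definition Ptopsp (R : realType) {n : nat} (F : set (face n)) :=
  subsp R (Ptop R F) (TOPsp (1 : R) open (realiz R F)).

Lemma toI1_subproof {R : realType} (x : R) :
  (0 <= Num.max 0 (Num.min x 1) <= 1).
Proof.
by rewrite le_max lexx /= ge_max ler01 /= ge_min lexx orbT.
Qed.

Definition toI1 {R : realType} (x : R) : Ival (1 : R) :=
  exist _ (Num.max 0 (Num.min x 1)) (toI1_subproof x).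

Definition Plset {R : realType} (l : R) {n : nat} (F : set (face n))
  : set (Ival l -> 'rV[R]_n) :=
  [set d | exists2 g, Ptop R F g & forall t, d t = g (toI1 (sval t / l))].

Definition Plsp {R : realType} (l : R) {n : nat} (F : set (face n)) :=
  subsp R (Plset l F) (TOPsp l open (realiz R F)).

Definition compose_map {A B C : Type} (p : (A -> B) * (B -> C)) : A -> C :=
  p.2 \o p.1.

(* Main.v *)
Require Import Defs.
From HB Require Import structures.
From mathcomp Require Import all_boot all_order all_algebra.
From mathcomp Require Import all_classical all_reals all_analysis.
From mathcomp Require Import finmap.
From mathcomp Require Import lra.
Import Order.TTheory GRing.Theory Num.Theory.
Import numFieldNormedType.Exports.
Local Open Scope classical_set_scope.
Local Open Scope ring_scope.
Set Implicit Arguments.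
Unset Strict Implicit.
Unset Printing Implicit Defensive.


Lemma Ival_eq (R : realType) (L : R) (a b : Ival L) : sval a = sval b -> a = b.
Proof.
case: a b => [a Ha] [b Hb] /= E; subst b; congr exist; exact: bool_irrelevance.
Qed.

Lemma Ival_ge0 (R : realType) (L : R) (a : Ival L) : 0 <= sval a.
Proof. by case: a => a /= /andP[]. Qed.
Lemma Ival_leL (R : realType) (L : R) (a : Ival L) : sval a <= L.
Proof. by case: a => a /= /andP[]. Qed.

Lemma open_inP (R : realType) (m : nat) (D A : set 'rV[R]_m) :
  open_in D A <-> (forall x0, D x0 -> A x0 -> exists2 d : R, 0 < d &
     forall x, D x -> `|x - x0| < d -> A x).
Proof.
split.
- move=> [Op [oO E]] x0 Dx0 Ax0.
  have : (D `&` Op) x0 by rewrite -E.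
  move=> [_ Ox0].
  case/nbhs_ballP: (oO x0 Ox0) => e /= e0 He.
  exists e => // x Dx xx0.
  have : (D `&` Op) x.
    split => //; apply: He; rewrite -ball_normE /ball_ /= -normrN opprB //.
  by rewrite -E => -[].
- move=> H.
  exists [set x | exists x0 d, [/\ D x0, A x0, 0 < d, (forall y, D y -> `|y - x0| < d -> A y) & `|x - x0| < d]].
  split.
  + move=> x [x0 [d [Dx0 Ax0 d0 Hd xd]]].
    apply/nbhs_ballP.
    exists (d - `|x - x0|); first by rewrite /= subr_gt0.
    move=> y; rewrite -ball_normE /ball_ /= => yx; exists x0, d; split => //.
    rewrite -(subrKA x) (le_lt_trans (ler_normD _ _)) //.
    by rewrite -ltrBrDr -normrN opprB.
  + apply/seteqP; split => x [Dx Ax]; split => //.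
    * have [d d0 Hd] := H x Dx Ax.
      by exists x, d; split => //; rewrite subrr normr0.
    * by case: Ax => x0 [d [Dx0 _ _ Hd xd]]; apply: Hd.
Qed.


Lemma clampI_subproof (R : realType) (L : R) (hL : 0 <= L) (r : R) :
  (0 <= Num.max 0 (Num.min r L) <= L).
Proof. by rewrite le_max lexx /= ge_max hL ge_min lexx orbT. Qed.

Definition clampI (R : realType) (L : R) (hL : 0 <= L) (r : R) : Ival L :=
  exist _ (Num.max 0 (Num.min r L)) (clampI_subproof hL r).

Lemma clampIE (R : realType) (L : R) (hL : 0 <= L) (r : R) :
  0 <= r <= L -> sval (clampI hL r) = r.
Proof.
move=> /andP[r0 rL] /=.
by rewrite (min_l rL) (max_r r0).
Qed.

Definition Icont {R : realType} {V : normedModType R} {L : R} (f : Ival L -> V) :=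
  forall a (e : R), 0 < e -> exists2 d : R, 0 < d &
    forall t, `|sval t - sval a| < d -> `|f t - f a| < e.

Lemma cont_Icont (R : realType) (V : normedModType R) (L : R) (f : Ival L -> V) :
  cont (@Itop R L) open f -> Icont f.
Proof.
move=> cf a e e0.
have [Op [oO E]] := cf _ (ball_open (f a) e).
have Oa : Op (sval a).
  have : (f @^-1` ball (f a) e) a by apply: ballxx.
  by rewrite E.
case/nbhs_ballP: (oO _ Oa) => d /= d0 Hd.
exists d => // t td.
have : (f @^-1` ball (f a) e) t.
  rewrite E /=; apply: Hd; rewrite -ball_normE /ball_ /= -normrN opprB //.
by rewrite /= -ball_normE /ball_ /= -normrN opprB.
Qed.

Lemma Icont_cont (R : realType) (V : normedModType R) (L : R) (f : Ival L -> V) :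
  Icont f -> cont (@Itop R L) open f.
Proof.
move=> cf U oU.
exists [set r | exists (t : Ival L) (d : R), [/\ 0 < d, (forall t', `|sval t' - sval t| < d -> U (f t'))
   & `|r - sval t| < d]].
split.
- move=> r [t [d [d0 Hd rd]]].
  apply/nbhs_ballP; exists (d - `|r - sval t|); first by rewrite /= subr_gt0.
  move=> y; rewrite -ball_normE /ball_ /= => yr; exists t, d; split => //.
  rewrite -(subrKA r) (le_lt_trans (ler_normD _ _)) //.
  by rewrite -ltrBrDr -normrN opprB.
- apply/seteqP; split => t /=.
  + move=> Ut.
    move: oU; rewrite openE => oU.
    case/nbhs_ballP: (oU _ Ut) => e /= e0 He.
    have [d d0 Hd] := cf t e e0.
    exists t, d; split => //; last by rewrite subrr normr0.
    move=> t' /Hd ft; apply: He; rewrite -ball_normE /ball_ /= -normrN opprB //.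
  + by case=> t0 [d [d0 Hd rd]]; apply: Hd.
Qed.

Lemma cont_Itop_sval (R : realType) (L L' : R) (f : Ival L -> Ival L') :
  cont (@Itop R L) (@Itop R L') f <-> cont (@Itop R L) open (fun t => sval (f t)).
Proof.
split.
- move=> cf Op oO; exact: (cf [set t | Op (sval t)] (ex_intro _ Op (conj oO erefl))).
- move=> cf U [Op [oO ->]]; exact: cf.
Qed.

Lemma finite_min (R : realType) (I : eqType) (s : seq I) (P : I -> R -> Prop) :
  (forall i d d', P i d -> 0 < d' <= d -> P i d') ->
  (forall i, i \in s -> exists2 d, 0 < d & P i d) ->
  exists2 d, 0 < d & forall i, i \in s -> P i d.
Proof.
move=> Pmon; elim: s => [|i s IH] H.
  by exists 1 => //.
have [d d0 Hd] := H i (mem_head _ _).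
have [d' d'0 Hd'] := IH (fun j js => H j (etrans (in_cons _ _ _) (introT orP (or_intror js)))).
exists (Num.min d d'); first by rewrite lt_min d0 d'0.
move=> j; rewrite in_cons => /orP[/eqP->|js].
  by apply: (Pmon i d _ Hd); rewrite lt_min d0 d'0 ge_min lexx.
by apply: (Pmon j d' _ (Hd' j js)); rewrite lt_min d0 d'0 ge_min lexx orbT.
Qed.

Definition mono {R : realType} {L L' : R} (f : Ival L -> Ival L') :=
  forall s t, sval s <= sval t -> sval (f s) <= sval (f t).

Lemma mono_inv (R : realType) (L L' : R) (f : Ival L -> Ival L') g :
  cancel f g -> cancel g f -> mono f -> mono g.
Proof.
move=> fg gf mf a b ab.
rewrite leNgt; apply/negP => ba.
have := mf _ _ (ltW ba); rewrite !gf => ba'.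
have eab : a = b by apply: Ival_eq; apply/eqP; rewrite eq_le ab ba'.
by move: ba; rewrite eab ltxx.
Qed.

Lemma mono_strict (R : realType) (L L' : R) (f : Ival L -> Ival L') g :
  cancel f g -> mono f -> forall s t, sval s < sval t -> sval (f s) < sval (f t).
Proof.
move=> fg mf s t st; rewrite lt_neqAle mf ?(ltW st) // andbT.
apply/negP => /eqP E.
have : s = t by rewrite -(fg s) -(fg t); congr g; apply: Ival_eq.
by move=> est; move: st; rewrite est ltxx.
Qed.

Lemma mono_end0 (R : realType) (L L' : R) (f : Ival L -> Ival L') g :
  cancel f g -> cancel g f -> mono f -> forall s, sval s = 0 -> sval (f s) = 0.
Proof.
move=> fg gf mf s s0.
have hL' : 0 <= L' by apply: le_trans (Ival_ge0 (f s)) (Ival_leL (f s)).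
set z := clampI hL' 0.
have z0 : sval z = 0 by rewrite clampIE // lexx.
have := mf s (g z); rewrite gf s0 z0 => /(_ (Ival_ge0 _)) le0.
by apply/eqP; rewrite eq_le le0 Ival_ge0.
Qed.

Lemma mono_endL (R : realType) (L L' : R) (f : Ival L -> Ival L') g :
  cancel f g -> cancel g f -> mono f -> forall s, sval s = L -> sval (f s) = L'.
Proof.
move=> fg gf mf s sL.
have hL' : 0 <= L' by apply: le_trans (Ival_ge0 (f s)) (Ival_leL (f s)).
set z := clampI hL' L'.
have zL : sval z = L' by rewrite clampIE // hL' lexx.
have := mf (g z) s; rewrite gf sL zL => /(_ (Ival_leL _)) le0.
by apply/eqP; rewrite eq_le le0 Ival_leL.
Qed.


Lemma margin (R : realType) (V : normedModType R) (L : R) (C : set (Ival L))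
  (g : Ival L -> V) (Op : set V) :
  compact [set sval t | t in C] -> Icont g -> open Op -> (forall a, C a -> Op (g a)) ->
  exists2 eps : R, 0 < eps & forall a, C a -> forall y, `|y - g a| < eps -> Op y.
Proof.
move=> cC cg oO CO.
rewrite compact_cover in cC.
pose D := [set p : R * R * R | exists a, [/\ C a, sval a = p.1.1, 0 < p.1.2, 0 < p.2 &
   ((forall y, `|y - g a| < p.2 *+ 2 -> Op y) /\
   (forall t, `|sval t - sval a| < p.1.2 -> `|g t - g a| < p.2))]].
have [] := cC _ D (fun p => ball p.1.1 p.1.2).
- by move=> p _; exact: ball_open.
- move=> r [a Ca <-].
  move: oO; rewrite openE => oO.
  case/nbhs_ballP: (oO _ (CO a Ca)) => e /= e0 He.
  have e20 : 0 < e / 2 by rewrite divr_gt0.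
  have [d d0 Hd] := cg a _ e20.
  exists (sval a, d, e / 2) => //.
    exists a; split => //; split => //= y hy; apply: He.
    by rewrite -ball_normE /ball_ /= -normrN opprB -(mulr_natr (e/2)) divfK // in hy *;
      rewrite ?pnatr_eq0.
  by apply: ballxx.
move=> D' D'D0 cov.
have D'D : forall i, i \in D' -> D i by move=> i /D'D0 /set_mem.
have [eps eps0 Heps] := finite_min (s := enum_fset D')
  (P := fun p eps => eps <= p.2)
  (fun i d d' h hd => le_trans (elimT andP hd).2 h)
  (fun i iD => ex_intro2 _ _ i.2 (match D'D i iD with ex_intro a (And5 _ _ _ h _) => h end) (lexx _)).
exists eps => // a Ca y ya.
have [p /= pD' pa] := cov (sval a) (ex_intro2 _ _ a Ca erefl).
have [a' [Ca' a'p p2 p3 [Hy Hg]]] := D'D p pD'.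
apply: Hy.
have := Hg a; rewrite a'p => /(_ _) ga.
have ga' : `|g a - g a'| < p.2.
  apply: ga; move: pa; rewrite -ball_normE /ball_ /= -normrN opprB //.
rewrite -(subrKA (g a)) (le_lt_trans (ler_normD _ _)) // mulr2n ltrD //.
exact: lt_le_trans ya (Heps p pD').
Qed.

Definition ctn {R : realType} {k : nat} {X : Type} (D : set 'rV[R]_k) (s : 'rV[R]_k -> X)
  (t : set (set X)) := forall V, t V -> open_in D (s @^-1` V).

Definition UC {R : realType} {k : nat} {L : R} {Y : Type} {V : normedModType R}
  (D : set 'rV[R]_k) (pi : Y -> V) (h : 'rV[R]_k -> Ival L -> Y) :=
  forall x0, D x0 -> forall e, 0 < e -> exists2 d : R, 0 < d &
    forall x, D x -> `|x - x0| < d -> forall t, `|pi (h x t) - pi (h x0 t)| < e.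

Lemma UC_cocont (R : realType) (V : normedModType R) (Y : Type) (tY : set (set Y))
  (pi : Y -> V) (L : R) (k : nat) (D : set 'rV[R]_k) (h : 'rV[R]_k -> Ival L -> Y) :
  (forall U, tY U -> exists2 Op, open Op & U = pi @^-1` Op) ->
  (forall x, D x -> Icont (pi \o h x)) ->
  UC D pi h -> ctn D h (Defs.compact_open (@Icompact R L) tY).
Proof.
move=> P1 hc uc W coW; apply/open_inP => x0 Dx0 Wx0.
have [kk [Vs [Vsub Vx0 Vincl]]] := coW _ Wx0.
suff H : forall i, i \in enum 'I_kk -> exists2 d : R, 0 < d &
    (fun i d => forall x, D x -> `|x - x0| < d -> Vs i (h x)) i d.
  have [d d0 Hd] := finite_min (s := enum 'I_kk)
    (P := fun i d => forall x, D x -> `|x - x0| < d -> Vs i (h x))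
    (fun i d d' H hd x Dx xd => H x Dx (lt_le_trans xd (elimT andP hd).2)) H.
  exists d => // x Dx xd; apply: Vincl => i; apply: Hd => //; exact: mem_enum.
move=> i _.
have [C [U [cC tU EV]]] := Vsub i.
have [Op oO EU] := P1 _ tU.
have CO : forall a, C a -> Op (pi (h x0 a)).
  by move=> a Ca; have := Vx0 i; rewrite EV /= => /(_ a Ca); rewrite EU.
have [eps eps0 Heps] := margin cC (hc _ Dx0) oO CO.
have [d d0 Hd] := uc x0 Dx0 eps eps0.
exists d => // x Dx xd; rewrite EV /= => a Ca; rewrite EU /=.
exact: Heps Ca _ (Hd x Dx xd a).
Qed.

Lemma cocont_UC (R : realType) (V : normedModType R) (Y : Type) (tY : set (set Y))
  (pi : Y -> V) (L : R) (k : nat) (D : set 'rV[R]_k) (h : 'rV[R]_k -> Ival L -> Y) :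
  (forall Op, open Op -> tY (pi @^-1` Op)) ->
  (forall x, D x -> Icont (pi \o h x)) ->
  ctn D h (Defs.compact_open (@Icompact R L) tY) -> UC D pi h.
Proof.
move=> P2 hc ch x0 Dx0 e e0.
have [hL|Lneg] := leP 0 L; last first.
  exists 1 => // x _ _ t; exfalso.
  by move: (le_trans (Ival_ge0 t) (Ival_leL t)); rewrite leNgt Lneg.
pose f0 := pi \o h x0.
have e20 : 0 < e / 2 by rewrite divr_gt0.
have cK : cover_compact [set sval t | t in [set: Ival L]].
  rewrite -compact_cover.
  suff -> : [set sval t | t in [set: Ival L]] = `[0, L]%classic by exact: segment_compact.
  apply/seteqP; split => r.
    by move=> [t _ <-]; rewrite /= in_itv /= Ival_ge0 Ival_leL.
  rewrite /= in_itv /= => rL; exists (clampI hL r) => //; exact: clampIE.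
pose Dc := [set p : R * R | exists a : Ival L, [/\ sval a = p.1, 0 < p.2 &
   forall t, `|sval t - sval a| <= p.2 -> `|f0 t - f0 a| < e / 2]].
have [] := cK _ Dc (fun p => ball p.1 p.2).
- by move=> p _; exact: ball_open.
- move=> r [a _ <-].
  have [d d0 Hd] := hc _ Dx0 a _ e20.
  have d20 : 0 < d / 2 by rewrite divr_gt0.
  exists (sval a, d / 2) => //=; last exact: ballxx.
  exists a; split => // t td; apply: Hd; apply: le_lt_trans td _.
  by rewrite ltr_pdivrMr // ltr_pMr // ltr1n.
move=> D' D'D0 cov.
have D'D : forall i, i \in D' -> Dc i by move=> i /D'D0 /set_mem.
pose s := enum_fset D'.
pose kk := size s.
pose pj (j : 'I_kk) := nth (0, 0) s j.
have pjD : forall j, Dc (pj j) by move=> j; apply: D'D; exact: mem_nth.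
pose Cj (j : 'I_kk) := [set t : Ival L | `|sval t - (pj j).1| <= (pj j).2].
pose aj (j : 'I_kk) := clampI hL (pj j).1.
have ajE : forall j, forall a : Ival L, sval a = (pj j).1 -> aj j = a.
  by move=> j a ha; apply: Ival_eq; rewrite clampIE -ha ?Ival_ge0 ?Ival_leL.
pose Uj (j : 'I_kk) := pi @^-1` ball (f0 (aj j)) (e / 2).
pose Vj (j : 'I_kk) := [set f : Ival L -> Y | forall t, Cj j t -> Uj j (f t)].
pose W := [set f | forall j, Vj j f].
have coW : Defs.compact_open (@Icompact R L) tY W.
  move=> f Wf; exists kk, Vj; split => //.
  move=> j; exists (Cj j), (Uj j); split => //; last exact: P2 (ball_open _ _).
  rewrite /Icompact /=.
  have [a [a1 a2 _]] := pjD j.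
  suff -> : [set sval t | t in Cj j] = `[0, L]%classic `&` closed_ball (pj j).1 (pj j).2.
    by apply: compact_closedI; [exact: segment_compact | exact: closed_ball_closed].
  rewrite closed_ballE //.
  apply/seteqP; split => r.
    move=> [t tC <-]; split; first by rewrite /= in_itv /= Ival_ge0 Ival_leL.
    by rewrite /closed_ball_ /= -normrN opprB.
  rewrite /= in_itv /= => -[rL rC]; exists (clampI hL r); last exact: clampIE.
  change (`|sval (clampI hL r) - (pj j).1| <= (pj j).2); rewrite clampIE //.
  by move: rC; rewrite /closed_ball_ /= -normrN opprB.
have Wx0 : W (h x0).
  move=> j t tC; rewrite /Uj /= -ball_normE /ball_ /=.
  have [a [a1 a2 Ha]] := pjD j.
  rewrite (ajE j a a1) -normrN opprB; apply: Ha; rewrite a1; exact: tC.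
have [d d0 Hd] := (open_inP _ _).1 (ch W coW) x0 Dx0 Wx0.
exists d => // x Dx xd t.
have tr : [set sval t | t in [set: Ival L]] (sval t) by exists t.
have [p /= pD' pt] := cov (sval t) tr.
have ps : p \in s by [].
have jlt : (index p s < kk)%N by rewrite index_mem.
pose j := Ordinal jlt.
have pjp : pj j = p by rewrite /pj nth_index.
have tC : Cj j t.
  change (`|sval t - (pj j).1| <= (pj j).2); rewrite pjp; apply: ltW.
  by move: pt; rewrite -ball_normE /ball_ -normrN opprB.
have h1 := Hd x Dx xd j t tC.
have [a [a1 a2 Ha]] := pjD j.
have h2 : `|f0 t - f0 a| < e / 2 by apply: Ha; rewrite a1; exact: tC.
change (ball (f0 (aj j)) (e / 2) (pi (h x t))) in h1.
rewrite (ajE j a a1) in h1.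
move: h1; rewrite -ball_normE /ball_ => h1.
have -> : pi (h x0 t) = f0 t by [].
rewrite -(subrKA (f0 a)) (le_lt_trans (ler_normD _ _)) //.
rewrite (splitr e) ltrD //; first by rewrite distrC.
by rewrite distrC.
Qed.


Lemma open_in_ext (R : realType) (k : nat) (D A B : set 'rV[R]_k) :
  (forall x, D x -> (A x <-> B x)) -> open_in D A -> open_in D B.
Proof.
move=> AB [Op [oO E]]; exists Op; split => //; rewrite -E.
by apply/seteqP; split => x [Dx h]; split => //; apply/(AB x Dx).
Qed.

Lemma open_in_full (R : realType) (k : nat) (D A : set 'rV[R]_k) :
  (forall x, D x -> A x) -> open_in D A.
Proof.
move=> h; exists setT; split; first exact: openT.
by apply/seteqP; split => x [Dx _]; split => //; apply: h.
Qed.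

Lemma kel_down (R : realType) (X : Type) (m : nat) (S : set X) (t : set (set X))
  (s : 'rV[R]_m.+1 -> X) :
  (forall V, t V -> V `<=` S) -> ctn (simplex R m) s (kelley R S t) ->
  ctn (simplex R m) s t.
Proof.
move=> tS cs V tV; apply: cs; split; first exact: tS.
by move=> m' s' _ hs'; apply: hs'.
Qed.

Lemma kel_up (R : realType) (X : Type) (m : nat) (S : set X) (t : set (set X))
  (s : 'rV[R]_m.+1 -> X) :
  (forall x, simplex R m x -> S (s x)) -> ctn (simplex R m) s t ->
  ctn (simplex R m) s (kelley R S t).
Proof. by move=> sS cs U [_ HU]; apply: HU. Qed.

Lemma sub_down (R : realType) (X : Type) (k : nat) (D : set 'rV[R]_k) (P : set X)
  (t : set (set X)) (s : 'rV[R]_k -> X) :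
  (forall x, D x -> P (s x)) -> ctn D s (Defs.subspace P t) -> ctn D s t.
Proof.
move=> sP cs V tV.
have := cs (P `&` V) (ex_intro _ V (conj tV erefl)).
apply: open_in_ext => x Dx; split; [by case | by move=> h; split => //; apply: sP].
Qed.

Lemma sub_up (R : realType) (X : Type) (k : nat) (D : set 'rV[R]_k) (P : set X)
  (t : set (set X)) (s : 'rV[R]_k -> X) :
  (forall x, D x -> P (s x)) -> ctn D s t -> ctn D s (Defs.subspace P t).
Proof.
move=> sP cs _ [V [tV ->]].
apply: open_in_ext (cs V tV) => x Dx; split; [by move=> h; split => //; apply: sP | by case].
Qed.

Lemma kelley_sub (R : realType) (X : Type) (S : set X) (t : set (set X)) V :
  kelley R S t V -> V `<=` S.
Proof. by case. Qed.

Lemma subspace_sub (X : Type) (P : set X) (t : set (set X)) V :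
  Defs.subspace P t V -> V `<=` P.
Proof. by move=> [V' [_ ->]] x []. Qed.

Lemma kelley_full (R : realType) (X : Type) (S : set X) (t : set (set X)) :
  kelley R S t S.
Proof. split => // m s sS _; exact: open_in_full. Qed.

Lemma ctn_prod (R : realType) (X Y : Type) (k : nat) (D : set 'rV[R]_k)
  (S1 : Defs.space X) (S2 : Defs.space Y) (s : 'rV[R]_k -> X * Y) :
  ctn D (fun x => (s x).1) S1.2 -> ctn D (fun x => (s x).2) S2.2 ->
  ctn D s (prod_top S1 S2).
Proof.
move=> c1 c2 W [Wsub HW]; apply/open_inP => x0 Dx0 Wx0.
have [U [V [oU oV Ux0 Vx0 inc]]] := HW _ Wx0.
have [d1 d10 H1] := (open_inP _ _).1 (c1 U oU) x0 Dx0 Ux0.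
have [d2 d20 H2] := (open_inP _ _).1 (c2 V oV) x0 Dx0 Vx0.
exists (Num.min d1 d2); first by rewrite lt_min d10 d20.
move=> x Dx; rewrite lt_min => /andP[h1 h2]; apply: inc.
  exact: H1. exact: H2.
Qed.

Lemma ctn_fst (R : realType) (X Y : Type) (k : nat) (D : set 'rV[R]_k)
  (S1 : Defs.space X) (S2 : Defs.space Y) (s : 'rV[R]_k -> X * Y) :
  (forall U, S1.2 U -> U `<=` S1.1) -> S2.2 S2.1 ->
  (forall x, D x -> S2.1 (s x).2) ->
  ctn D s (prod_top S1 S2) -> ctn D (fun x => (s x).1) S1.2.
Proof.
move=> S1sub S2full sS2 cs U oU.
have : prod_top S1 S2 (U `*` S2.1).
  split; first by move=> p [p1 p2]; split => //; apply: S1sub oU _ p1.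
  move=> p [p1 p2]; exists U, S2.1; split => //; try (by move=> q q1 q2; split).
move/cs; apply: open_in_ext => x Dx; split; first by case.
by move=> h; split => //; apply: sS2.
Qed.

Lemma ctn_snd (R : realType) (X Y : Type) (k : nat) (D : set 'rV[R]_k)
  (S1 : Defs.space X) (S2 : Defs.space Y) (s : 'rV[R]_k -> X * Y) :
  (forall U, S2.2 U -> U `<=` S2.1) -> S1.2 S1.1 ->
  (forall x, D x -> S1.1 (s x).1) ->
  ctn D s (prod_top S1 S2) -> ctn D (fun x => (s x).2) S2.2.
Proof.
move=> S2sub S1full sS1 cs U oU.
have : prod_top S1 S2 (S1.1 `*` U).
  split; first by move=> p [p1 p2]; split => //; apply: S2sub oU _ p2.
  move=> p [p1 p2]; exists S1.1, U; split => //; try (by move=> q q1 q2; split).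
move/cs; apply: open_in_ext => x Dx; split; first by case.
by move=> h; split => //; apply: sS1.
Qed.


Lemma mxn_ge (R : realType) (n : nat) (x : 'rV[R]_n) j : `|x ord0 j| <= `|x|.
Proof.
rewrite [in leRHS]/Num.Def.normr /= mx_normrE.
by apply/bigmax_geP; right => /=; exists (ord0, j).
Qed.

Lemma mxn_le (R : realType) (n : nat) (x : 'rV[R]_n) (c : R) :
  0 <= c -> (forall j, `|x ord0 j| <= c) -> `|x| <= c.
Proof.
move=> c0 h; rewrite [in leLHS]/Num.Def.normr /= mx_normrE.
apply/bigmax_leP; split => // -[i j] _ /=.
by rewrite (ord1 i); apply: h.
Qed.

Lemma mxn_lt (R : realType) (n : nat) (x : 'rV[R]_n) (c : R) :
  0 < c -> (forall j, `|x ord0 j| < c) -> `|x| < c.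
Proof.
move=> c0 h; rewrite [in ltLHS]/Num.Def.normr /= mx_normrE.
apply/bigmax_ltP; split => // -[i j] _ /=.
by rewrite (ord1 i); apply: h.
Qed.

Lemma tt_mono (R : realType) (tt : nat -> R) (k : nat) :
  (forall i, (i < k)%N -> tt i <= tt i.+1) ->
  forall i j, (i <= j)%N -> (j <= k)%N -> tt i <= tt j.
Proof.
move=> h i j; elim: j => [|j IH] ij jk.
  by move: ij; rewrite leqn0 => /eqP ->.
move: ij; rewrite leq_eqVlt => /orP[/eqP -> //|ij].
apply: le_trans (IH ij (ltnW jk)) (h j jk).
Qed.

Lemma piece_exists (R : realType) (tt : nat -> R) (k : nat) :
  (0 < k)%N -> (forall i, (i < k)%N -> tt i <= tt i.+1) ->
  forall r, tt 0%N <= r -> r <= tt k -> exists i, (i < k)%N /\ tt i <= r <= tt i.+1.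
Proof.
elim: k => [//|k IH] _ h r r0 rk.
have [k0|kpos] := eqVneq k 0%N.
  by exists 0%N; subst k; rewrite r0 rk.
have [rk'|rk'] := leP r (tt k).
  have h' : forall i, (i < k)%N -> tt i <= tt i.+1.
    by move=> i ik; apply: h; rewrite ltnS ltnW.
  have k0' : (0 < k)%N by rewrite lt0n.
  have [i [ik hi]] := IH k0' h' r r0 rk'.
  by exists i; split => //; rewrite ltnS ltnW.
by exists k; rewrite ltnSn (ltW rk') rk.
Qed.

Lemma in_face01 (R : realType) (n : nat) (c : face n) (x : 'rV[R]_n) :
  in_face c x -> forall j, 0 <= x ord0 j <= 1.
Proof.
move=> h j; move: (h j); case: (c j) => [[]|] //= ->; by rewrite ?lexx ?ler01.
Qed.

Lemma tame_tt (R : realType) (L : R) (k : nat) (tt : nat -> R) :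
  tt 0%N = 0 -> tt k = L -> (forall i, (i < k)%N -> tt i <= tt i.+1) ->
  forall i, (i <= k)%N -> 0 <= tt i <= L.
Proof.
move=> t0 tk tm i ik.
by rewrite -t0 -tk !(tt_mono tm) // leq0n.
Qed.

Lemma tame_mono (R : realType) (n : nat) (F : set (face n)) (L : R) (g : Ival L -> 'rV[R]_n) :
  tame_dpath F g -> forall s u : Ival L, sval s <= sval u -> forall j, g s ord0 j <= g u ord0 j.
Proof.
move=> [_ [k [tt [t0 tk tm tp tv]]]] s u su.
have hL : 0 <= L by apply: le_trans (Ival_ge0 s) (Ival_leL s).
have range := tame_tt t0 tk tm.
suff H : forall i, (i <= k)%N -> forall s u : Ival L, sval s <= sval u -> sval u <= tt i ->
   forall j, g s ord0 j <= g u ord0 j.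
  by apply: (H k (leqnn k)) => //; rewrite tk; exact: Ival_leL.
elim => [|i IH] ik {su}s {}u su ui j.
  have u0 : sval u = 0 by apply/eqP; rewrite eq_le Ival_ge0 andbT; move: ui; rewrite t0.
  have s0 : sval s = 0 by apply/eqP; rewrite eq_le Ival_ge0 andbT; move: su; rewrite u0.
  by have -> : s = u by apply: Ival_eq; rewrite s0 u0.
have [ui'|ui'] := leP (sval u) (tt i).
  exact: IH (ltnW ik) s u su ui' j.
have [c _ [_ Hm]] := tp i ik.
have [si|si] := leP (tt i) (sval s).
  exact: Hm.
have [ti0 tiL] := andP (range i (ltnW ik)).
pose z := clampI hL (tt i).
have zE : sval z = tt i by rewrite clampIE // ti0 tiL.
have sz : sval s <= sval z by rewrite zE ltW.
have zi : sval z <= tt i by rewrite zE.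
apply: (@le_trans _ _ (g z ord0 j)); first exact: (IH (ltnW ik) s z sz zi j).
apply: Hm; rewrite ?zE // ltW //.
Qed.

Lemma tame_face (R : realType) (n : nat) (F : set (face n)) (L : R) (g : Ival L -> 'rV[R]_n) :
  tame_dpath F g -> 0 < L -> forall t, exists2 c, F c & in_face c (g t).
Proof.
move=> [_ [k [tt [t0 tk tm tp tv]]]] L0 t.
have kpos : (0 < k)%N.
  by rewrite lt0n; apply/negP => /eqP k0; move: tk; rewrite k0 t0 => L0'; move: L0; rewrite -L0' ltxx.
have r0 : tt 0%N <= sval t by rewrite t0 Ival_ge0.
have rk : sval t <= tt k by rewrite tk Ival_leL.
have [i [ik /andP[h1 h2]]] := piece_exists kpos tm r0 rk.
have [c Fc [Hc _]] := tp i ik.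
by exists c => //; apply: Hc; rewrite h1 h2.
Qed.

Lemma tame_comp (R : realType) (n : nat) (F : set (face n)) (L L' : R)
  (g : Ival L -> 'rV[R]_n) (phi : Ival L' -> Ival L) (psi : Ival L -> Ival L') :
  tame_dpath F g -> cancel phi psi -> cancel psi phi -> mono phi ->
  cont (@Itop R L') (@Itop R L) phi -> tame_dpath F (g \o phi).
Proof.
move=> [cg [k [tt [t0 tk tm tp tv]]]] fg gf mf cf.
have mg := mono_inv fg gf mf.
split; first by move=> U oU; exact: cf _ (cg U oU).
have range := tame_tt t0 tk tm.
have hL : 0 <= L by have /andP[h1 h2] := range 0%N (leq0n k); exact: le_trans h1 h2.
pose c i := clampI hL (tt i).
have cE : forall i, (i <= k)%N -> sval (c i) = tt i.
  by move=> i ik; rewrite clampIE // range.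
have phic : forall i, (i <= k)%N -> sval (phi (psi (c i))) = tt i by move=> i ik; rewrite gf cE.
exists k, (fun i => sval (psi (c i))); split.
- by apply: (mono_end0 gf fg mg); rewrite cE.
- by apply: (mono_endL gf fg mg); rewrite cE.
- by move=> i ik; apply: mg; rewrite (cE i (ltnW ik)) (cE i.+1 ik); exact: tm.
- move=> i ik; have [cc Fc [Hin Hm]] := tp i ik.
  have lo : forall s, sval (psi (c i)) <= sval s -> tt i <= sval (phi s).
    by move=> s /mf; rewrite phic // ltnW.
  have hi : forall s, sval s <= sval (psi (c i.+1)) -> sval (phi s) <= tt i.+1.
    by move=> s /mf; rewrite phic.
  exists cc => //; split.
    by move=> s /andP[h1 h2] /=; apply: Hin; rewrite lo // hi.
  move=> s u h1 h2 h3 j /=; apply: Hm; [exact: lo | exact: mf | exact: hi].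
- move=> i ik s si /=.
  have -> : s = psi (c i) by apply: Ival_eq.
  by apply: (tv i ik); rewrite phic.
Qed.


Lemma mono_up (R : realType) (L L' : R) (f : Ival L -> Ival L') g :
  cancel f g -> cancel g f -> mono f -> forall a e, 0 < e -> exists2 d : R, 0 < d &
  forall t, sval a <= sval t -> sval t < sval a + d -> sval (f t) < sval (f a) + e.
Proof.
move=> fg gf mf a e e0.
have hL' : 0 <= L' by apply: le_trans (Ival_ge0 (f a)) (Ival_leL (f a)).
have e20 : 0 < e / 2 by rewrite divr_gt0.
have e2e : e / 2 < e by rewrite ltr_pdivrMr // ltr_pMr // ltr1n.
set y := sval (f a).
have y0 : 0 <= y by apply: Ival_ge0.
have [yL|yL] := leP (y + e / 2) L'.
- pose z := clampI hL' (y + e / 2).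
  have zE : sval z = y + e / 2 by rewrite clampIE // yL addr_ge0 // ltW.
  have ap : sval a < sval (g z).
    rewrite ltNge; apply/negP => /mf; rewrite gf zE => h.
    by move: h; rewrite gerDl lt_geF.
  exists (sval (g z) - sval a); first by rewrite subr_gt0.
  move=> t _; rewrite addrC subrK => /ltW /mf; rewrite gf zE => h.
  by apply: le_lt_trans h _; rewrite ltrD2l.
- exists 1 => // t _ _.
  apply: le_lt_trans (Ival_leL _) _; apply: lt_trans yL _; by rewrite ltrD2l.
Qed.

Lemma mono_down (R : realType) (L L' : R) (f : Ival L -> Ival L') g :
  cancel f g -> cancel g f -> mono f -> forall a e, 0 < e -> exists2 d : R, 0 < d &
  forall t, sval t <= sval a -> sval a - d < sval t -> sval (f a) - e < sval (f t).
Proof.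
move=> fg gf mf a e e0.
have hL' : 0 <= L' by apply: le_trans (Ival_ge0 (f a)) (Ival_leL (f a)).
have e20 : 0 < e / 2 by rewrite divr_gt0.
have e2e : e / 2 < e by rewrite ltr_pdivrMr // ltr_pMr // ltr1n.
set y := sval (f a).
have yL : y <= L' by apply: Ival_leL.
have [y0|y0] := leP 0 (y - e / 2).
- pose z := clampI hL' (y - e / 2).
  have h1 : y - e / 2 <= L' by apply: (@le_trans _ _ y) => //; rewrite gerBl ltW.
  have zE : sval z = y - e / 2 by rewrite clampIE // y0 h1.
  have ap : sval (g z) < sval a.
    rewrite ltNge; apply/negP => /mf; rewrite gf zE => h.
    by move: h; rewrite lerBrDr gerDl leNgt e20.
  exists (sval a - sval (g z)); first by rewrite subr_gt0.
  move=> t _; rewrite opprB addrC subrK => /ltW /mf; rewrite gf zE => h.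
  by apply: lt_le_trans h; rewrite ltrD2l ltrN2.
- exists 1 => // t _ _.
  apply: lt_le_trans (Ival_ge0 _); apply: le_lt_trans y0; by rewrite lerD2l lerN2 ltW.
Qed.

Lemma mono_cont (R : realType) (L L' : R) (f : Ival L -> Ival L') g :
  cancel f g -> cancel g f -> mono f -> cont (@Itop R L) (@Itop R L') f.
Proof.
move=> fg gf mf; apply/cont_Itop_sval; apply: Icont_cont => a e e0.
have [du du0 Hu] := mono_up fg gf mf a e0.
have [dl dl0 Hl] := mono_down fg gf mf a e0.
exists (Num.min du dl); first by rewrite lt_min du0 dl0.
move=> t; rewrite lt_min => /andP[tu tl] /=.
rewrite ltr_norml in tu; rewrite ltr_norml in tl.
case/andP: tu => tu1 tu2; case/andP: tl => tl1 tl2.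
have [at_|ta] := leP (sval a) (sval t).
- have h1 := mf _ _ at_.
  have h2 : sval t < sval a + du by lra.
  have h3 := Hu t at_ h2.
  rewrite ger0_norm; lra.
- have h1 := mf _ _ (ltW ta).
  have h2 : sval a - dl < sval t by lra.
  have h3 := Hl t (ltW ta) h2.
  rewrite ler0_norm; lra.
Qed.

Lemma zero_nE (R : realType) (n : nat) j : zero_n R n ord0 j = 0.
Proof. by rewrite /zero_n mxE. Qed.
Lemma one_nE (R : realType) (n : nat) j : one_n R n ord0 j = 1.
Proof. by rewrite /one_n mxE. Qed.

Lemma npos (R : realType) (n : nat) : (0 < n)%N -> 0 < (n%:R : R).
Proof. by move=> h; rewrite ltr0n. Qed.

Lemma N_01 (R : realType) (n : nat) (F : set (face n)) (g : Ival (n%:R : R) -> 'rV[R]_n) :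
  (0 < n)%N -> Nset R F g -> forall t j, 0 <= g t ord0 j <= 1.
Proof.
move=> n0 [tg _ _] t j.
have [c _ Hc] := tame_face tg (npos R n0) t.
exact: in_face01 Hc j.
Qed.

Lemma N_sum (R : realType) (n : nat) (F : set (face n)) (g : Ival (n%:R : R) -> 'rV[R]_n) :
  (0 < n)%N -> Nset R F g -> forall t, \sum_j g t ord0 j = sval t.
Proof.
move=> n0 Ng t; have [tg ng [f0 f1]] := Ng.
have hn : 0 <= (n%:R : R) by rewrite ler0n.
pose z := clampI hn 0.
have z0 : sval z = 0 by rewrite clampIE // lexx.
rewrite -(ng z t z0) (f0 z z0); apply: eq_bigr => j _.
rewrite zero_nE subr0 ger0_norm //.
by have /andP[] := N_01 n0 Ng t j.
Qed.

Lemma sum_ge_term (R : realType) (n : nat) (u : 'I_n -> R) j :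
  (forall i, 0 <= u i) -> u j <= \sum_i u i.
Proof.
move=> h; rewrite (bigD1 j) //= lerDl; apply: sumr_ge0 => i _; exact: h.
Qed.

Lemma N_lip (R : realType) (n : nat) (F : set (face n)) (g : Ival (n%:R : R) -> 'rV[R]_n) :
  (0 < n)%N -> Nset R F g -> forall a b, `|g a - g b| <= `|sval a - sval b|.
Proof.
move=> n0 Ng.
have [tg _ _] := Ng.
suff H : forall a b, sval a <= sval b -> `|g a - g b| <= `|sval a - sval b|.
  move=> a b; have [ab|ba] := leP (sval a) (sval b); first exact: H.
  by rewrite distrC (distrC (sval a)); apply: H; apply: ltW.
move=> a b ab; apply: mxn_le => // j.
have mj := tame_mono tg ab j.
rewrite !mxE ler0_norm ?subr_le0 // opprB.
rewrite ler0_norm ?subr_le0 // opprB.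
rewrite -(N_sum n0 Ng b) -(N_sum n0 Ng a) -sumrB.
apply: (sum_ge_term (u := fun i => g b ord0 i - g a ord0 i)) => i.
by rewrite /= subr_ge0; exact: (tame_mono tg ab i).
Qed.

Lemma N_inj (R : realType) (n : nat) (F : set (face n)) (g : Ival (n%:R : R) -> 'rV[R]_n) :
  (0 < n)%N -> Nset R F g -> forall a b, g a = g b -> a = b.
Proof.
move=> n0 Ng a b e; apply: Ival_eq.
by rewrite -(N_sum n0 Ng a) -(N_sum n0 Ng b) e.
Qed.

Lemma N_Icont (R : realType) (n : nat) (F : set (face n)) (g : Ival (n%:R : R) -> 'rV[R]_n) :
  (0 < n)%N -> Nset R F g -> Icont g.
Proof.
move=> n0 Ng a e e0; exists e => // t te.
exact: le_lt_trans (N_lip n0 Ng t a) te.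
Qed.


Lemma toI1E (R : realType) (x : R) : 0 <= x <= 1 -> sval (toI1 x) = x.
Proof. by move=> /andP[x0 x1] /=; rewrite (min_l x1) (max_r x0). Qed.

Definition scl {R : realType} (l : R) (t : Ival l) : Ival (1 : R) := toI1 (sval t / l).
Definition sc1 {R : realType} (l : R) (hl : 0 <= l) (u : Ival (1 : R)) : Ival l :=
  clampI hl (l * sval u).

Lemma scl_in (R : realType) (l : R) (t : Ival l) : 0 < l -> 0 <= sval t / l <= 1.
Proof.
move=> l0; apply/andP; split; first by apply: divr_ge0; [exact: Ival_ge0 | exact: ltW].
by rewrite ler_pdivrMr // mul1r; exact: Ival_leL.
Qed.

Lemma sclE (R : realType) (l : R) (t : Ival l) : 0 < l -> sval (scl t) = sval t / l.
Proof. by move=> l0; rewrite /scl toI1E // scl_in. Qed.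

Lemma sc1E (R : realType) (l : R) (hl : 0 <= l) (u : Ival (1 : R)) :
  sval (sc1 hl u) = l * sval u.
Proof.
by rewrite /sc1 clampIE // mulr_ge0 ?Ival_ge0 //= ler_piMr // Ival_leL.
Qed.

Lemma scl_sc1 (R : realType) (l : R) (hl : 0 <= l) : 0 < l -> cancel (@scl R l) (sc1 hl).
Proof.
move=> l0 t; apply: Ival_eq; rewrite sc1E sclE // mulrC divfK //; exact: lt0r_neq0.
Qed.

Lemma sc1_scl (R : realType) (l : R) (hl : 0 <= l) : 0 < l -> cancel (sc1 hl) (@scl R l).
Proof.
move=> l0 u; apply: Ival_eq; rewrite sclE // sc1E mulrAC divff ?mul1r //; exact: lt0r_neq0.
Qed.

Lemma scl_mono (R : realType) (l : R) : 0 < l -> mono (@scl R l).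
Proof. by move=> l0 s t st; rewrite !sclE // ler_pM2r // invr_gt0. Qed.

Lemma sc1_mono (R : realType) (l : R) (hl : 0 <= l) : mono (sc1 hl).
Proof. by move=> s t st; rewrite !sc1E ler_wpM2l. Qed.

Lemma Pl_props (R : realType) (n : nat) (F : set (face n)) (l : R) (d : Ival l -> 'rV[R]_n) :
  0 < l -> Plset l F d ->
  [/\ tame_dpath F d, regular d & from_to d (zero_n R n) (one_n R n)].
Proof.
move=> l0 [g [tg rg _ [f0 f1]] dE].
have hl : 0 <= l by exact: ltW.
have dgE : d = g \o @scl R l by apply: funext => t; exact: dE.
have c1 := scl_sc1 hl l0; have c2 := sc1_scl hl l0.
have ms := scl_mono l0.
rewrite dgE; split.
- by apply: tame_comp tg c1 c2 ms (mono_cont c1 c2 ms).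
- move=> s t st.
  have st' := mono_strict c1 ms st.
  have [u' [/andP[h1 h2] hne]] := rg _ _ st'.
  exists (sc1 hl u'); split; last by rewrite /= c2.
  have m1 := sc1_mono hl; have := m1 _ _ h1; have := m1 _ _ h2.
  by rewrite !c1 => -> ->.
- split => s hs /=.
    by apply: f0; rewrite sclE // hs mul0r.
  by apply: f1; rewrite sclE // hs divff // lt0r_neq0.
Qed.

Lemma zero_one_neq (R : realType) (n : nat) : (0 < n)%N -> zero_n R n <> one_n R n.
Proof.
move=> n0 e.
have := congr1 (fun m : 'rV[R]_n => m ord0 (Ordinal n0)) e.
by rewrite /= zero_nE one_nE => /eqP; rewrite eq_sym oner_eq0.
Qed.

Lemma forward (R : realType) (n : nat) (F : set (face n)) (l : R)
  (phi : Ival l -> Ival (n%:R : R)) (g : Ival (n%:R : R) -> 'rV[R]_n) :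
  (0 < n)%N -> 0 < l -> Gset l n phi -> Nset R F g -> Plset l F (g \o phi).
Proof.
move=> n0 l0 [mphi [psi [fg gf cphi cpsi]]] Ng.
have hl : 0 <= l by exact: ltW.
have c1 := scl_sc1 hl l0; have c2 := sc1_scl hl l0.
have ms := scl_mono l0.
have [tg ng [f0 f1]] := Ng.
pose th := phi \o sc1 hl.
pose thi := @scl R l \o psi.
have tc1 : cancel th thi by move=> u; rewrite /th /thi /= fg c2.
have tc2 : cancel thi th by move=> y; rewrite /th /thi /= c1 gf.
have mth : mono th by move=> s t st; apply: mphi; apply: sc1_mono.
exists (g \o th); last by move=> t; rewrite /th /= c1.
split.
- exact: tame_comp tg tc1 tc2 mth (mono_cont tc1 tc2 mth).
- move=> s t st; exists t; split; first by rewrite (ltW st) lexx.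
  move=> /(N_inj n0 Ng) /(can_inj tc1) ets; move: st; rewrite ets ltxx //.
- have h1 : 0 <= (1 : R) <= 1 by rewrite ler01 lexx.
  have h0 : 0 <= (0 : R) <= 1 by rewrite ler01 lexx.
  exists (toI1 0), (toI1 1) => /=.
  rewrite f0; last by apply: (mono_end0 tc1 tc2 mth); rewrite toI1E.
  rewrite f1; last by apply: (mono_endL tc1 tc2 mth); rewrite toI1E.
  exact: zero_one_neq.
- split => s hs /=.
    by apply: f0; apply: (mono_end0 tc1 tc2 mth).
  by apply: f1; apply: (mono_endL tc1 tc2 mth).
Qed.


Definition sig {R : realType} {n : nat} {L : R} (d : Ival L -> 'rV[R]_n) (t : Ival L) : R :=
  \sum_j d t ord0 j.

Lemma sum_n_one (R : realType) (n : nat) : \sum_(j < n) (1 : R) = n%:R.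
Proof. by rewrite sumr_const card_ord. Qed.

Lemma sig_dist (R : realType) (n : nat) (x y : 'rV[R]_n) :
  `|\sum_j x ord0 j - \sum_j y ord0 j| <= n%:R * `|x - y|.
Proof.
rewrite -sumrB (le_trans (ler_norm_sum _ _ _)) //.
rewrite -sum_n_one mulr_suml; apply: ler_sum => j _; rewrite mul1r.
by have := mxn_ge (x - y) j; rewrite !mxE.
Qed.

Lemma Pl_01 (R : realType) (n : nat) (F : set (face n)) (l : R) (d : Ival l -> 'rV[R]_n) :
  0 < l -> Plset l F d -> forall t j, 0 <= d t ord0 j <= 1.
Proof.
move=> l0 Pd t j; have [td _ _] := Pl_props l0 Pd.
have [c _ Hc] := tame_face td l0 t; exact: in_face01 Hc j.
Qed.

Lemma sig_range (R : realType) (n : nat) (F : set (face n)) (l : R) (d : Ival l -> 'rV[R]_n) :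
  0 < l -> Plset l F d -> forall t, 0 <= sig d t <= n%:R.
Proof.
move=> l0 Pd t; apply/andP; split.
  by apply: sumr_ge0 => j _; have /andP[] := Pl_01 l0 Pd t j.
rewrite -sum_n_one; apply: ler_sum => j _; by have /andP[] := Pl_01 l0 Pd t j.
Qed.

Lemma sig_strict (R : realType) (n : nat) (F : set (face n)) (l : R) (d : Ival l -> 'rV[R]_n) :
  0 < l -> Plset l F d -> forall s t, sval s < sval t -> sig d s < sig d t.
Proof.
move=> l0 Pd s t st; have [td rd _] := Pl_props l0 Pd.
have [u [/andP[su ut] hne]] := rd s t st.
have [j hj] : exists j, d u ord0 j != d s ord0 j.
  case: (pselect (exists j, d u ord0 j != d s ord0 j)) => // hne'; exfalso; apply: hne.
  apply/rowP => j; case: (eqVneq (d u ord0 j) (d s ord0 j)) => // h.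
  by exfalso; apply: hne'; exists j.
have m1 := tame_mono td su j; have m2 := tame_mono td ut j.
rewrite -subr_gt0 /sig -sumrB.
rewrite (bigD1 j) //= ltr_pwDl //.
  by rewrite subr_gt0 (lt_le_trans _ m2) // lt_neqAle eq_sym hj m1.
apply: sumr_ge0 => i _; rewrite subr_ge0; apply: tame_mono td _ _ (ltW st) i.
Qed.

Lemma sig_Icont (R : realType) (n : nat) (L : R) (d : Ival L -> 'rV[R]_n) :
  Icont d -> Icont (fun t => sig d t : R^o).
Proof.
move=> cd a e e0.
have n10 : 0 < (n.+1%:R : R) by rewrite ltr0n.
have [dl dl0 Hd] := cd a (e / n.+1%:R) (divr_gt0 e0 n10).
exists dl => // t /Hd h.
apply: le_lt_trans (sig_dist _ _) _.
apply: (@le_lt_trans _ _ (n%:R * (e / n.+1%:R))).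
  by rewrite ler_wpM2l // ltW.
by rewrite mulrA ltr_pdivrMr // mulrC ltr_pM2l // ltr_nat.
Qed.

Lemma sig_end (R : realType) (n : nat) (F : set (face n)) (l : R) (d : Ival l -> 'rV[R]_n) :
  0 < l -> Plset l F d ->
  (forall s, sval s = 0 -> sig d s = 0) /\ (forall s, sval s = l -> sig d s = n%:R).
Proof.
move=> l0 Pd; have [_ _ [f0 f1]] := Pl_props l0 Pd; split => s hs.
  by rewrite /sig f0 // (eq_bigr (fun _ => 0)) ?big1 // => j _; rewrite zero_nE.
by rewrite /sig f1 // -sum_n_one; apply: eq_bigr => j _; rewrite one_nE.
Qed.

Lemma clamp_lip (R : realType) (L : R) (hL : 0 <= L) (r r0 : R) :
  `|sval (clampI hL r) - sval (clampI hL r0)| <= `|r - r0|.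
Proof.
have h1 := ler_norm (r - r0); have h2 := ler_norm (r0 - r); rewrite distrC in h2.
rewrite /= ler_norml; apply/andP; split.
all: case: (leP r L) => a; rewrite ?(min_l a) ?(min_r (ltW a));
     case: (leP r0 L) => b; rewrite ?(min_l b) ?(min_r (ltW b));
     try (case: (leP 0 r) => c; rewrite ?(max_r c) ?(max_l (ltW c)));
     try (case: (leP 0 r0) => c'; rewrite ?(max_r c') ?(max_l (ltW c')));
     try (case: (leP 0 L) => c''; rewrite ?(max_r c'') ?(max_l (ltW c'')));
     lra.
Qed.

Lemma sig_surj (R : realType) (n : nat) (F : set (face n)) (l : R) (d : Ival l -> 'rV[R]_n) :
  0 < l -> Plset l F d -> forall y, 0 <= y <= n%:R -> exists t, sig d t = y.
Proof.
move=> l0 Pd y hy.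
have hl : 0 <= l by exact: ltW.
have [[cd _] _ _] := Pl_props l0 Pd.
have sc := sig_Icont (cont_Icont cd).
pose f := fun r : R => sig d (clampI hl r).
have cf : continuous f.
  move=> x; apply/cvgrPdist_lt => e e0.
  have [dl dl0 Hd] := sc (clampI hl x) e e0.
  apply/nbhs_ballP; exists dl => //= r hr.
  have hr' : `|x - r| < dl by move: hr; rewrite /ball /=. 
  rewrite distrC; apply: Hd; apply: le_lt_trans (clamp_lip _ _ _) _.
  by rewrite distrC.
have [e0 eL] := sig_end l0 Pd.
have f0 : f 0 = 0 by apply: e0; rewrite clampIE // lexx.
have fl : f l = n%:R by apply: eL; rewrite clampIE // hl lexx.
have hv : Num.min (f 0) (f l) <= y <= Num.max (f 0) (f l).
  by rewrite f0 fl (min_l (ler0n _ _)) (max_r (ler0n _ _)).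
have cfw : {within `[0, l], continuous f} by apply: continuous_subspaceT.
have [c _ fc] := IVT hl cfw hv.
by exists (clampI hl c).
Qed.

Definition phid {R : realType} {n : nat} {l : R} (d : Ival l -> 'rV[R]_n) (t : Ival l)
  : Ival (n%:R : R) := clampI (ler0n R n) (sig d t).

Definition psid {R : realType} {n : nat} {l : R} (hl : 0 <= l) (d : Ival l -> 'rV[R]_n)
  (y : Ival (n%:R : R)) : Ival l :=
  match pselect (exists t, sval (phid d t) = sval y) with
  | left e => proj1_sig (cid e)
  | right _ => clampI hl 0
  end.

Definition gamd {R : realType} {n : nat} {l : R} (hl : 0 <= l) (d : Ival l -> 'rV[R]_n) :=
  d \o psid hl d.

Lemma phidE (R : realType) (n : nat) (F : set (face n)) (l : R) (d : Ival l -> 'rV[R]_n) :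
  0 < l -> Plset l F d -> forall t, sval (phid d t) = sig d t.
Proof. by move=> l0 Pd t; rewrite clampIE // (sig_range l0 Pd). Qed.

Lemma phid_psid (R : realType) (n : nat) (F : set (face n)) (l : R) (hl : 0 <= l)
  (d : Ival l -> 'rV[R]_n) : 0 < l -> Plset l F d -> cancel (psid hl d) (phid d).
Proof.
move=> l0 Pd y; rewrite /psid; case: pselect => [e|ne].
  by apply: Ival_eq; case: (cid e).
exfalso; apply: ne.
have hy : 0 <= sval y <= n%:R by rewrite Ival_ge0 Ival_leL.
have [t ht] := sig_surj l0 Pd hy.
by exists t; rewrite (phidE l0 Pd) ht.
Qed.

Lemma phid_mono (R : realType) (n : nat) (F : set (face n)) (l : R) (d : Ival l -> 'rV[R]_n) :
  0 < l -> Plset l F d -> mono (phid d).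
Proof.
move=> l0 Pd s t st; rewrite !(phidE l0 Pd).
rewrite le_eqVlt in st; case/orP: st => [/eqP e|st].
  by rewrite (Ival_eq e).
exact/ltW/(sig_strict l0 Pd).
Qed.

Lemma psid_phid (R : realType) (n : nat) (F : set (face n)) (l : R) (hl : 0 <= l)
  (d : Ival l -> 'rV[R]_n) : 0 < l -> Plset l F d -> cancel (phid d) (psid hl d).
Proof.
move=> l0 Pd t.
have e := phid_psid hl l0 Pd (phid d t).
set u := psid hl d (phid d t) in e *.
apply: Ival_eq; apply/eqP; rewrite eq_le; apply/andP; split.
  rewrite leNgt; apply/negP => /(sig_strict l0 Pd); rewrite -!(phidE l0 Pd) e ltxx //.
rewrite leNgt; apply/negP => /(sig_strict l0 Pd); rewrite -!(phidE l0 Pd) e ltxx //.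
Qed.

Lemma phid_Gset (R : realType) (n : nat) (F : set (face n)) (l : R) (hl : 0 <= l)
  (d : Ival l -> 'rV[R]_n) : 0 < l -> Plset l F d -> Gset l n (phid d).
Proof.
move=> l0 Pd.
have c1 := psid_phid hl l0 Pd; have c2 := phid_psid hl l0 Pd.
have m1 := phid_mono l0 Pd; have m2 := mono_inv c1 c2 m1.
split => //; exists (psid hl d); split => //.
  exact: mono_cont c1 c2 m1.
exact: mono_cont c2 c1 m2.
Qed.

Lemma gamd_Nset (R : realType) (n : nat) (F : set (face n)) (l : R) (hl : 0 <= l)
  (d : Ival l -> 'rV[R]_n) : 0 < l -> Plset l F d -> Nset R F (gamd hl d).
Proof.
move=> l0 Pd.
have c1 := psid_phid hl l0 Pd; have c2 := phid_psid hl l0 Pd.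
have m1 := phid_mono l0 Pd; have m2 := mono_inv c1 c2 m1.
have [td _ [f0 f1]] := Pl_props l0 Pd.
split.
- exact: tame_comp td c2 c1 m2 (mono_cont c2 c1 m2).
- move=> s t s0; have gE : forall u, gamd hl d u = d (psid hl d u) by []; rewrite !gE.
  rewrite (f0 _ (mono_end0 c2 c1 m2 s0)).
  have -> : sval t = sig d (psid hl d t) by rewrite -(phidE l0 Pd) (phid_psid hl l0 Pd).
  rewrite /sig; apply: eq_bigr => j _.
  rewrite zero_nE subr0 ger0_norm //.
  by have /andP[] := Pl_01 l0 Pd (psid hl d t) j.
- split => s hs /=.
    by apply: f0; exact: (mono_end0 c2 c1 m2).
  by apply: f1; exact: (mono_endL c2 c1 m2).
Qed.

Lemma gamd_comp (R : realType) (n : nat) (F : set (face n)) (l : R) (hl : 0 <= l)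
  (d : Ival l -> 'rV[R]_n) : 0 < l -> Plset l F d -> gamd hl d \o phid d = d.
Proof.
move=> l0 Pd; apply: funext => t; change (d (psid hl d (phid d t)) = d t).
by rewrite (psid_phid hl l0 Pd).
Qed.


Lemma G_Icont (R : realType) (n : nat) (l : R) (phi : Ival l -> Ival (n%:R : R)) :
  Gset l n phi -> Icont (fun t => sval (phi t) : R^o).
Proof.
move=> [_ [psi [_ _ cphi _]]]; apply: cont_Icont; exact/cont_Itop_sval.
Qed.

Lemma UC_comp (R : realType) (n : nat) (F : set (face n)) (l : R) (k : nat)
  (D : set 'rV[R]_k) (s1 : 'rV[R]_k -> Ival l -> Ival (n%:R : R))
  (s2 : 'rV[R]_k -> Ival (n%:R : R) -> 'rV[R]_n) :
  (0 < n)%N ->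
  (forall x, D x -> Nset R F (s2 x)) ->
  UC D (fun t => sval t : R^o) s1 -> UC D id s2 -> UC D id (fun x => s2 x \o s1 x).
Proof.
move=> n0 N2 u1 u2 x0 Dx0 e e0.
have e20 : 0 < e / 2 by rewrite divr_gt0.
have [d1 d10 H1] := u1 x0 Dx0 _ e20.
have [d2 d20 H2] := u2 x0 Dx0 _ e20.
exists (Num.min d1 d2); first by rewrite lt_min d10 d20.
move=> x Dx; rewrite lt_min => /andP[h1 h2] t /=.
have a1 := H2 x Dx h2 (s1 x t).
have a2 := H1 x Dx h1 t.
have a3 := N_lip n0 (N2 x0 Dx0) (s1 x t) (s1 x0 t).
rewrite -(subrKA (s2 x0 (s1 x t))) (le_lt_trans (ler_normD _ _)) //.
rewrite (splitr e) ltrD //; exact: le_lt_trans a3 a2.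
Qed.

Lemma comp_Icont (R : realType) (n : nat) (F : set (face n)) (l : R)
  (phi : Ival l -> Ival (n%:R : R)) (g : Ival (n%:R : R) -> 'rV[R]_n) :
  (0 < n)%N -> Gset l n phi -> Nset R F g -> Icont (g \o phi).
Proof.
move=> n0 Gp Ng a e e0.
have [d d0 Hd] := G_Icont Gp a e0.
exists d => // t /Hd h; exact: le_lt_trans (N_lip n0 Ng _ _) h.
Qed.

Lemma UC_inv (R : realType) (n : nat) (F : set (face n)) (l : R) (hl : 0 <= l) (k : nat)
  (D : set 'rV[R]_k) (s : 'rV[R]_k -> Ival l -> 'rV[R]_n) :
  (0 < n)%N -> 0 < l -> (forall x, D x -> Plset l F (s x)) -> UC D id s ->
  UC D (fun t => sval t : R^o) (fun x => phid (s x)) /\ UC D id (fun x => gamd hl (s x)).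
Proof.
move=> n0 l0 Ps us.
have n10 : 0 < (n.+1%:R : R) by rewrite ltr0n.
have key : forall x0, D x0 -> forall e, 0 < e -> exists2 d : R, 0 < d &
    forall x, D x -> `|x - x0| < d -> forall t, (n.+1)%:R * `|s x t - s x0 t| < e.
  move=> x0 Dx0 e e0.
  have [d d0 Hd] := us x0 Dx0 _ (divr_gt0 e0 n10).
  exists d => // x Dx xd t; rewrite mulrC -ltr_pdivlMr //; exact: Hd.
split.
- move=> x0 Dx0 e e0; have [d d0 Hd] := key x0 Dx0 e e0.
  exists d => // x Dx xd t.
  rewrite (phidE l0 (Ps x Dx)) (phidE l0 (Ps x0 Dx0)).
  apply: le_lt_trans (sig_dist _ _) _; apply: le_lt_trans (Hd x Dx xd t).
  by rewrite ler_wpM2r // ler_nat.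
- move=> x0 Dx0 e e0; have [d d0 Hd] := key x0 Dx0 e e0.
  exists d => // x Dx xd y.
  have Px := Ps x Dx; have Px0 := Ps x0 Dx0.
  set tx := psid hl (s x) y.
  have E1 : gamd hl (s x) y = s x tx by [].
  have E2 : s x0 tx = gamd hl (s x0) (phid (s x0) tx).
    by rewrite -[in LHS](gamd_comp hl l0 Px0).
  have E3 : sval y = sig (s x) tx by rewrite -(phidE l0 Px) (phid_psid hl l0 Px).
  have b1 := N_lip n0 (gamd_Nset hl l0 Px0) (phid (s x0) tx) y.
  rewrite (phidE l0 Px0) E3 in b1.
  have b2 := sig_dist (s x0 tx) (s x tx).
  have b3 : `|s x0 tx - gamd hl (s x0) y| <= n%:R * `|s x tx - s x0 tx|.
    rewrite [X in `|X - _|]E2; apply: le_trans b1 _.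
    by rewrite [X in _ <= _ * X]distrC; exact: b2.
  rewrite E1 -(subrKA (s x0 tx)) (le_lt_trans (ler_normD _ _)) //.
  apply: le_lt_trans (Hd x Dx xd tx).
  by rewrite mulrSr mulrDl mul1r addrC lerD.
Qed.



Lemma chain_down2 (R : realType) (X : Type) (m : nat) (P Cm : set X) (co : set (set X))
  (s : 'rV[R]_m.+1 -> X) :
  P `<=` Cm -> (forall x, simplex R m x -> P (s x)) ->
  ctn (simplex R m) s (Defs.subspace P (kelley R Cm (Defs.subspace Cm co))) ->
  ctn (simplex R m) s co.
Proof.
move=> PC sP c.
have sC : forall x, simplex R m x -> Cm (s x) by move=> x /sP /PC.
apply: (sub_down sC); apply: kel_down; first exact: subspace_sub.
exact: sub_down sP c.
Qed.

Lemma chain_down3 (R : realType) (X : Type) (m : nat) (P Cm : set X) (co : set (set X))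
  (s : 'rV[R]_m.+1 -> X) :
  P `<=` Cm -> (forall x, simplex R m x -> P (s x)) ->
  ctn (simplex R m) s (kelley R P (Defs.subspace P (kelley R Cm (Defs.subspace Cm co)))) ->
  ctn (simplex R m) s co.
Proof.
move=> PC sP c; apply: chain_down2 PC sP _.
by apply: kel_down c; exact: subspace_sub.
Qed.

Lemma chain_up2 (R : realType) (X : Type) (m : nat) (P Cm : set X) (co : set (set X))
  (s : 'rV[R]_m.+1 -> X) :
  P `<=` Cm -> (forall x, simplex R m x -> P (s x)) ->
  ctn (simplex R m) s co ->
  ctn (simplex R m) s (Defs.subspace P (kelley R Cm (Defs.subspace Cm co))).
Proof.
move=> PC sP c.
have sC : forall x, simplex R m x -> Cm (s x) by move=> x /sP /PC.
apply: (sub_up sP); apply: (kel_up sC); exact: sub_up sC c.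
Qed.

Lemma chain_up3 (R : realType) (X : Type) (m : nat) (P Cm : set X) (co : set (set X))
  (s : 'rV[R]_m.+1 -> X) :
  P `<=` Cm -> (forall x, simplex R m x -> P (s x)) ->
  ctn (simplex R m) s co ->
  ctn (simplex R m) s (kelley R P (Defs.subspace P (kelley R Cm (Defs.subspace Cm co)))).
Proof. by move=> PC sP c; apply: (kel_up sP); exact: chain_up2. Qed.

Lemma Pl_Cm (R : realType) (n : nat) (F : set (face n)) (l : R) :
  0 < l -> Plset l F `<=` Cmap l open (realiz R F).
Proof.
move=> l0 d Pd; have [td _ _] := Pl_props l0 Pd; split; last by case: td.
by move=> t; have [c Fc Hc] := tame_face td l0 t; exists c.
Qed.

Lemma N_Cm (R : realType) (n : nat) (F : set (face n)) :
  (0 < n)%N -> Nset R F `<=` Cmap (n%:R : R) open (realiz R F).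
Proof.
move=> n0 g [tg _ _]; split; last by case: tg.
by move=> t; have [c Fc Hc] := tame_face tg (npos R n0) t; exists c.
Qed.

Lemma G_Cm (R : realType) (n : nat) (l : R) :
  Gset l n `<=` Cmap l (@Itop R n%:R) setT.
Proof. by move=> phi [_ [psi [_ _ c _]]]; split. Qed.

Lemma Itop_P1 (R : realType) (L : R) U :
  @Itop R L U -> exists2 Op : set R^o, open Op & U = (fun t : Ival L => sval t : R^o) @^-1` Op.
Proof. by move=> [Op [oO ->]]; exists Op. Qed.

Lemma Itop_P2 (R : realType) (L : R) (Op : set R^o) :
  open Op -> @Itop R L ((fun t : Ival L => sval t : R^o) @^-1` Op).
Proof. by move=> oO; exists Op. Qed.

Lemma comp_inj (R : realType) (n : nat) (F : set (face n)) (l : R)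
  (p q : (Ival l -> Ival (n%:R : R)) * (Ival (n%:R : R) -> 'rV[R]_n)) :
  (0 < n)%N -> Gset l n p.1 -> Nset R F p.2 -> Gset l n q.1 -> Nset R F q.2 ->
  compose_map p = compose_map q -> p = q.
Proof.
case: p q => [phi g] [phi' g'] n0 /= Gp Ng Gq Nq E.
have e1 : phi = phi'.
  apply: funext => t; apply: Ival_eq.
  rewrite -(N_sum n0 Ng) -(N_sum n0 Nq).
  by have := congr1 (fun f => f t) E; rewrite /compose_map /= => ->.
subst phi'.
have [_ [psi [_ c2 _ _]]] := Gp.
have e2 : g = g'.
  apply: funext => u; rewrite -(c2 u).
  by have := congr1 (fun f => f (psi u)) E.
by rewrite e2.
Qed.

Lemma main_homeo (R : realType) (n : nat) (F : set (face n)) (l : R) :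
  (0 < n)%N -> 0 < l ->
  homeo (prodsp R (Gsp l n) (Nsp R F)) (Plsp l F) (@compose_map _ _ _).
Proof.
move=> n0 l0.
have hl : 0 <= l by exact: ltW.
pose f := @compose_map (Ival l) (Ival (n%:R : R)) 'rV[R]_n.
pose finv := fun d : Ival l -> 'rV[R]_n => (phid d, gamd hl d).
have fmap : forall p, (Gset l n `*` Nset R F) p -> Plset l F (f p).
  by move=> [phi g] [/= Gp Ng]; exact: forward.
have finvmap : forall d, Plset l F d -> (Gset l n `*` Nset R F) (finv d).
  by move=> d Pd; split => /=; [exact: (phid_Gset hl l0 Pd) | exact: (gamd_Nset hl l0 Pd)].
have ffinv : forall d, Plset l F d -> f (finv d) = d.
  by move=> d Pd; exact: (gamd_comp hl l0 Pd).
have finj : forall p q, (Gset l n `*` Nset R F) p -> (Gset l n `*` Nset R F) q ->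
    f p = f q -> p = q.
  by move=> p q [Gp Np] [Gq Nq]; exact: (comp_inj n0 Gp Np Gq Nq).
split.
- exact: fmap.
- exact: finj.
- by move=> d Pd; exists (finv d); [exact: finvmap | exact: ffinv].
move=> U Usub; split.
- move=> [_ HU]; split.
    by move=> _ [p Up <-]; apply: fmap; apply: Usub.
  move=> m s sP cs.
  pose g := fun x => finv (s x).
  have gS : forall x, simplex R m x -> (Gset l n `*` Nset R F) (g x).
    by move=> x /sP; exact: finvmap.
  have HUg := HU m g gS.
  apply: open_in_ext (HUg _) => [x Dx|].
    split => [Ugx|[p Up E]].
      by exists (g x) => //; exact: (ffinv _ (sP x Dx)).
    have fg : f (g x) = f p by rewrite (ffinv _ (sP x Dx)) -E.
    have e := finj _ _ (gS x Dx) (Usub _ Up) fg; by rewrite /preimage /= e.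
  have cs0 := chain_down2 (@Pl_Cm R n F l l0) sP cs.
  have us : UC (simplex R m) id s.
    apply: (cocont_UC (tY := open)) => //.
    by move=> x /sP Pd; have [[cd _] _ _] := Pl_props l0 Pd; exact: cont_Icont.
  have [u1 u2] := UC_inv hl n0 l0 sP us.
  have cG : ctn (simplex R m) (fun x => (g x).1) (Gsp l n).2.
    apply: (chain_up3 (@G_Cm R n l)); first by move=> x /sP Pd; exact: (phid_Gset hl l0 Pd).
    apply: (UC_cocont (@Itop_P1 R n%:R)) u1.
    by move=> x /sP Pd; exact: G_Icont (phid_Gset hl l0 Pd).
  have cN : ctn (simplex R m) (fun x => (g x).2) (Nsp R F).2.
    apply: (chain_up3 (@N_Cm R n F n0)); first by move=> x /sP Pd; exact: (gamd_Nset hl l0 Pd).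
    apply: (UC_cocont (tY := open)) u2; first by move=> V oV; exists V.
    by move=> x /sP Pd; exact: N_Icont n0 (gamd_Nset hl l0 Pd).
  exact: ctn_prod cG cN.
- move=> [_ HfU]; split => // m s sS cs.
  have sG : forall x, simplex R m x -> Gset l n (s x).1 by move=> x /sS [].
  have sN : forall x, simplex R m x -> Nset R F (s x).2 by move=> x /sS [].
  have c1 := @ctn_fst R _ _ _ (simplex R m) (Gsp l n) (Nsp R F) s (fun V h => @kelley_sub R _ _ _ V h) (@kelley_full R _ _ _) sN cs.
  have c2 := @ctn_snd R _ _ _ (simplex R m) (Gsp l n) (Nsp R F) s (fun V h => @kelley_sub R _ _ _ V h) (@kelley_full R _ _ _) sG cs.
  have c1' := chain_down3 (@G_Cm R n l) sG c1.
  have c2' := chain_down3 (@N_Cm R n F n0) sN c2.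
  have u1 : UC (simplex R m) (fun t => sval t : R^o) (fun x => (s x).1).
    apply: (cocont_UC (@Itop_P2 R n%:R)) c1'.
    by move=> x /sG Gp; exact: G_Icont Gp.
  have u2 : UC (simplex R m) id (fun x => (s x).2).
    apply: (cocont_UC (tY := open)) c2' => //.
    by move=> x /sN Np; exact: N_Icont n0 Np.
  have u3 := UC_comp n0 sN u1 u2.
  have sP : forall x, simplex R m x -> Plset l F (f (s x)).
    by move=> x Dx; apply: fmap; apply: sS.
  have c3 : ctn (simplex R m) (fun x => f (s x)) (Defs.compact_open (@Icompact R l) open).
    apply: (UC_cocont (tY := open)) u3; first by move=> V oV; exists V.
    by move=> x Dx; exact: comp_Icont n0 (sG x Dx) (sN x Dx).
  have c4 := chain_up2 (@Pl_Cm R n F l l0) sP c3.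
  have := HfU m (fun x => f (s x)) sP c4.
  apply: open_in_ext => x Dx; split => [[p Up E]|Usx].
    by have e := finj _ _ (Usub _ Up) (sS x Dx) E; rewrite /preimage /= -e.
  by exists (s x).
Qed.

Lemma Plset1 (R : realType) (n : nat) (F : set (face n)) : Plset (1 : R) F = Ptop R F.
Proof.
apply/seteqP; split => d.
  move=> [g Pg dE].
  have -> : d = g; last by [].
  apply: funext => t; rewrite dE; congr g; apply: Ival_eq.
  by rewrite toI1E divr1 ?Ival_ge0 ?Ival_leL.
move=> Pd; exists d => // t; congr d; apply: Ival_eq.
by rewrite toI1E divr1 ?Ival_ge0 ?Ival_leL.
Qed.

Lemma Plsp1 (R : realType) (n : nat) (F : set (face n)) : Plsp (1 : R) F = Ptopsp R F.
Proof. by rewrite /Plsp /Ptopsp Plset1. Qed.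

Unset Implicit Arguments.
Local Close Scope classical_set_scope.

Theorem proposition5p5 (R : realType) (n : nat) (l : R) :
  (1 <= n)%N -> 0 < l ->
  [/\ homeo (prodsp R (Gsp l n) (Nsp R (cubeF n))) (Plsp l (cubeF n))
        (@compose_map _ _ _),
      homeo (prodsp R (Gsp l n) (Nsp R (bdryF n))) (Plsp l (bdryF n))
        (@compose_map _ _ _),
      homeo (prodsp R (Gsp (1 : R) n) (Nsp R (cubeF n))) (Ptopsp R (cubeF n))
        (@compose_map _ _ _) &
      homeo (prodsp R (Gsp (1 : R) n) (Nsp R (bdryF n))) (Ptopsp R (bdryF n))
        (@compose_map _ _ _)].
Proof.
move=> n1 l0.
split; [exact: main_homeo | exact: main_homeo | |].
  by rewrite -Plsp1; apply: main_homeo.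
by rewrite -Plsp1; apply: main_homeo.
Qed.
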